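(* Let $\mathbb{F}=\mathbb{F}_p$, $r_1,\dots,r_n\in\mathbb{F}^N$ and $k\in[N]$. Then $$\mathcal{S}^{\{k\}}(r_1,\dots,r_n)=\sum_{\tau\subseteq[n]}(-1)^{|\tau|}\,|\tau|!\; r_\tau(k)\;\mathcal{S}\big(r[[n]\setminus\tau]\big).$$
   Context: For vectors $w_1,\dots,w_L\in\mathbb{F}^N$ and $T\subseteq[N]$, $\mathcal{S}^T(w_1,\dots,w_L)=\sum_\rho\prod_{i=1}^Lw_i(\rho(i))$ over injective maps $\rho:[L]\to[N]\setminus T$ (sum of permanents of all $L\times L$ submatrices avoiding columns in $T$), and $\mathcal{S}=\mathcal{S}^{\emptyset}$. For $\tau\subseteq[n]$, $r_\tau$ is the coordinatewise product $\prod_{i\in\tau}r_i$, with $r_\emptyset$ the all-ones vector; $r[\sigma]$ denotes the list of vectors $r_i$, $i\in\sigma$, and $\mathcal{S}(r[\emptyset])=1$. $r(j)$ is the $j$-th coordinate. *)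

(* Defs.v *)
From mathcomp Require Import all_boot all_order all_algebra.
Set Implicit Arguments. Unset Strict Implicit. Unset Printing Implicit Defensive.
Import GRing.Theory.
Local Open Scope ring_scope.

(* S^T(w_1,...,w_L): sum over injective rho : [L] -> [N] \ T of prod_i w_i(rho i).
   Vectors in F^N are functions 'I_N -> F; the list w_1..w_L is w : 'I_L -> 'I_N -> F. *)
Definition Ssum (R : comNzRingType) (N L : nat) (T : {set 'I_N})
    (w : 'I_L -> 'I_N -> R) : R :=
  \sum_(rho : {ffun 'I_L -> 'I_N} | injectiveb rho && [forall i, rho i \notin T])
     \prod_(i < L) w i (rho i).

Definition rprod (R : comNzRingType) (N n : nat) (r : 'I_n -> 'I_N -> R)
    (tau : {set 'I_n}) : 'I_N -> R :=
  fun j => \prod_(i in tau) r i j.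

(* r[sigma]: the list of the r_i, i in sigma, in increasing order of i. *)
Definition rsub (R : comNzRingType) (N n : nat) (r : 'I_n -> 'I_N -> R)
    (sigma : {set 'I_n}) : 'I_#|sigma| -> 'I_N -> R :=
  fun i => r (enum_val i).
Arguments rsub {R N n} r sigma _ _.
Arguments rprod {R N n} r tau _.

(* Main.v *)
Require Import Defs.
From mathcomp Require Import all_boot all_order all_algebra.
From mathcomp Require Import ring.
Import GRing.Theory.
Local Open Scope ring_scope.
Set Implicit Arguments. Unset Strict Implicit.

Section S.
Variables (R : comNzRingType) (N n : nat) (r : 'I_n -> 'I_N -> R) (k : 'I_N).

Definition okf (T : {set 'I_N}) (s : {set 'I_n}) (rho : {ffun 'I_n -> 'I_N}) : bool :=
  [&& [forall i, (i \notin s) ==> (rho i == k)],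
      [forall i, forall j, [&& i \in s, j \in s & rho i == rho j] ==> (i == j)] &
      [forall i, (i \in s) ==> (rho i \notin T)]].

Definition Gen T s := \sum_(rho | okf T s rho) \prod_(i in s) r i (rho i).

Lemma gen_setT T : Ssum T r = Gen T setT.
Proof.
rewrite /Ssum /Gen; apply: eq_big => rho.
  rewrite /okf; apply/andP/and3P => [[/injectiveP inj /forallP av]|[_ /forallP inj /forallP av]].
    split; apply/forallP => i; rewrite ?inE //.
      by apply/forallP => j; apply/implyP => /and3P [_ _ /eqP/inj ->].
    exact: av.
  split; last by apply/forallP => i; have := av i; rewrite inE.
  apply/injectiveP => i j e; have := inj i; move/forallP/(_ j); rewrite !inE e eqxx /=.
  by move/eqP.
move=> _; apply: eq_bigl => i; by rewrite inE.
Qed.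

Definition ext (s : {set 'I_n}) (f : {ffun 'I_#|s| -> 'I_N}) : {ffun 'I_n -> 'I_N} :=
  [ffun i => if [pick j | enum_val j == i] is Some j then f j else k].
Definition res (s : {set 'I_n}) (g : {ffun 'I_n -> 'I_N}) : {ffun 'I_#|s| -> 'I_N} :=
  [ffun j => g (enum_val j)].
Arguments ext : clear implicits.
Arguments res : clear implicits.

Lemma ext_val (s : {set 'I_n}) f j : ext s f (enum_val j) = f j.
Proof.
rewrite ffunE; case: pickP => [j' /eqP /enum_val_inj -> //|/(_ j)].
by rewrite eqxx.
Qed.

Lemma ext_out (s : {set 'I_n}) f i : i \notin s -> ext s f i = k.
Proof.
move=> ni; rewrite ffunE; case: pickP => // j /eqP e.
by move: ni; rewrite -e enum_valP.
Qed.

Lemma in_val (s : {set 'I_n}) i : i \in s -> exists j : 'I_#|s|, i = enum_val j.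
Proof. move=> hi; exists (enum_rank_in hi i); by rewrite enum_rankK_in. Qed.

Lemma bridge T s : Ssum T (rsub r s) = Gen T s.
Proof.
rewrite /Gen (reindex (ext s)) /=; last first.
  exists (res s) => [f _|g]; first by apply/ffunP => j; rewrite ffunE ext_val.
  rewrite inE => /and3P [/forallP out _ _]; apply/ffunP => i.
  case: (boolP (i \in s)) => hi.
    by have [j ->] := in_val hi; rewrite ext_val ffunE.
  by rewrite ext_out //; have := out i; rewrite hi => /eqP ->.
rewrite /Ssum; apply: eq_big => f.
  rewrite /okf; apply/andP/and3P => [[/injectiveP inj /forallP av]|[_ /forallP inj /forallP av]].
    split; apply/forallP => i.
    - by apply/implyP => ?; rewrite ext_out.
    - apply/forallP => j; apply/implyP => /and3P [hi hj].
      have [i' ->] := in_val hi; have [j' ->] := in_val hj.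
      by rewrite !ext_val => /eqP /inj ->.
    - apply/implyP => hi; have [i' ->] := in_val hi; rewrite ext_val; exact: av.
  split.
    apply/injectiveP => i j e; have := inj (enum_val i); move/forallP/(_ (enum_val j)).
    by rewrite !enum_valP !ext_val e eqxx /= => /eqP /enum_val_inj.
  apply/forallP => j; have := av (enum_val j); by rewrite enum_valP ext_val.
move=> _; rewrite [RHS]big_enum_val; apply: eq_bigr => j _; by rewrite ext_val.
Qed.

Lemma okf_k (s : {set 'I_n}) rho : okf [set k] s rho = okf set0 s rho && [forall i, (i \in s) ==> (rho i != k)].
Proof.
rewrite /okf; apply/and3P/andP => [[o inj /forallP av]|[/and3P[o inj _] /forallP av]].
  split; first by apply/and3P; split => //; apply/forallP => i; rewrite inE implybT.
  by apply/forallP => i; have := av i; rewrite inE.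
by split => //; apply/forallP => i; have := av i; rewrite inE.
Qed.

Lemma okf_D1 (s : {set 'I_n}) i rho : i \in s ->
  okf [set k] (s :\ i) rho = okf set0 s rho && (rho i == k).
Proof.
move=> hi; rewrite /okf; apply/and3P/andP.
  move=> [/forallP o /forallP inj /forallP av].
  have rik : rho i == k by have := o i; rewrite !inE eqxx.
  split => //; apply/and3P; split.
  - apply/forallP => j; apply/implyP => hj; have := o j; rewrite !inE (negbTE hj) andbF //.
  - apply/forallP => a; apply/forallP => b; apply/implyP => /and3P [ha hb e].
    case: (eqVneq a i) => [ea|nai]; case: (eqVneq b i) => [eb|nbi].
    + by rewrite ea eb.
    + have := av b; rewrite !inE nbi hb /= -(eqP e) ea (eqP rik) eqxx //.
    + have := av a; rewrite !inE nai ha /= (eqP e) eb (eqP rik) eqxx //.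
    + have := inj a; move/forallP/(_ b); by rewrite !inE nai nbi ha hb e.
  - by apply/forallP => j; rewrite inE implybT.
move=> [/and3P [/forallP o /forallP inj _] rik]; split.
- apply/forallP => j; rewrite !inE negb_and negbK; apply/implyP.
  case/orP => [/eqP -> //|hj]; have := o j; by rewrite hj.
- apply/forallP => a; apply/forallP => b; apply/implyP; rewrite !inE => /and3P [/andP[_ ha] /andP[_ hb] e].
  have := inj a; move/forallP/(_ b); by rewrite ha hb e.
- apply/forallP => j; apply/implyP; rewrite !inE => /andP [nji hj]; apply/negP => /eqP e.
  have := inj j; move/forallP/(_ i); rewrite hj hi e (eqP rik) eqxx /= => /eqP eji.
  by rewrite eji eqxx in nji.
Qed.

Lemma decomp (s : {set 'I_n}) : Gen set0 s = Gen [set k] s + \sum_(i in s) r i k * Gen [set k] (s :\ i).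
Proof.
pose F rho := \prod_(i in s) r i (rho i).
have pt : forall rho, okf set0 s rho ->
   F rho = (if [forall i, (i \in s) ==> (rho i != k)] then F rho else 0)
           + \sum_(i in s | rho i == k) F rho.
  move=> rho /and3P [_ /forallP inj _]; case: ifP => [/forallP nk|/negbT].
    rewrite big1 ?addr0 // => i /andP [hi e]; by have := nk i; rewrite hi e.
  rewrite negb_forall => /existsP [i0]; rewrite negb_imply negbK => /andP [hi0 e0].
  rewrite add0r (bigD1 i0) /=; last by rewrite hi0.
  rewrite big1 ?addr0 // => j /andP [/andP [hj ej] nj].
  have := inj j; move/forallP/(_ i0); by rewrite hj hi0 (eqP ej) (eqP e0) eqxx (negbTE nj).
rewrite /Gen (eq_bigr _ pt) big_split /=; congr (_ + _).
  by rewrite -big_mkcondr; apply: eq_bigl => rho; rewrite okf_k.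
rewrite (exchange_big_dep (mem s)) /=; last by move=> rho i _ /andP [].
apply: eq_bigr => i hi; rewrite big_distrr /=.
apply: eq_big => rho; first by rewrite okf_D1 // hi.
rewrite hi /= => /andP [_ e]; by rewrite /F (big_setD1 _ hi) (eqP e).
Qed.

Lemma cD1 (a : {set 'I_n}) i : i \in a -> rprod r a k = r i k * rprod r (a :\ i) k.
Proof. move=> hi; by rewrite /rprod (big_setD1 _ hi). Qed.


Lemma setCD1 (a : {set 'I_n}) i : i \in a -> ~: (a :\ i) :\ i = ~: a.
Proof.
move=> hi; apply/setP => x; rewrite !inE; case: (eqVneq x i) => [->|] //=.
by rewrite hi.
Qed.

Lemma coef (m : nat) (c : R) : (0 < m)%N ->
  (-1) ^+ m * (m`!)%:R * c + ((-1) ^+ m.-1 * (m.-1`!)%:R * c) *+ m = 0.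
Proof.
case: m => // m _ /=; rewrite factS natrM exprS -mulr_natr.
ring.
Qed.

Lemma main_id : Gen [set k] setT = \sum_(tau : {set 'I_n})
     (-1) ^+ #|tau| * (#|tau|`!)%:R * rprod r tau k * Gen set0 (~: tau).
Proof.
set a := fun tau : {set 'I_n} => (-1) ^+ #|tau| * (#|tau|`!)%:R * rprod r tau k.
under eq_bigr do rewrite decomp mulrDr.
rewrite big_split /=.
have E2 : \sum_(tau : {set 'I_n}) a tau * (\sum_(i in ~: tau) r i k * Gen [set k] (~: tau :\ i))
  = \sum_(al : {set 'I_n}) (((-1) ^+ #|al|.-1 * (#|al|.-1`!)%:R * rprod r al k) * Gen [set k] (~: al)) *+ #|al|.
  under eq_bigr do rewrite big_distrr /=.
  rewrite (exchange_big_dep predT) //=.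
  transitivity (\sum_(i < n) \sum_(al : {set 'I_n} | i \in al)
     ((-1) ^+ #|al|.-1 * (#|al|.-1`!)%:R * rprod r al k) * Gen [set k] (~: al)).
    apply: eq_bigr => i _.
    rewrite (reindex_onto (fun al => al :\ i) (fun tau => i |: tau)) /=; last first.
      by move=> tau; rewrite inE => ni; rewrite setU1K.
    apply: eq_big => al.
      rewrite !inE eqxx /=; apply/eqP/idP => [<-|hi]; first by rewrite !inE eqxx.
      by rewrite setD1K.
    move=> /andP [_ /eqP e]; have hi : i \in al by rewrite -e !inE eqxx.
    rewrite setCD1 // (cD1 hi) (cardsD1 i al) hi /= add0n.
    rewrite /a; ring.
  rewrite (exchange_big_dep predT) //=; apply: eq_bigr => al _.
  by rewrite sumr_const.
rewrite E2 -big_split /= (bigD1 set0) //= big1 ?addr0.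
  by rewrite cards0 /= /rprod big_set0 !mulr1 mulr0n addr0 mul1r setC0.
move=> al nz; have p : (0 < #|al|)%N by rewrite card_gt0.
by rewrite -mulrnAl -mulrDl coef // mul0r.
Qed.
End S.

Theorem lemma2p5 (p : nat) (hp : prime p) (N n : nat)
    (r : 'I_n -> 'I_N -> 'F_p) (k : 'I_N) :
  Ssum [set k] r =
  \sum_(tau : {set 'I_n})
     (-1) ^+ #|tau| * (#|tau|`!)%:R * rprod r tau k
       * Ssum set0 (rsub r (~: tau)).
Proof.
rewrite (gen_setT _ k) main_id; apply: eq_bigr => tau _; by rewrite (bridge _ k).
Qed.
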